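(* Let $P\in\mathbb{C}[y]$ with $\deg P\geq 2$, let $\delta\in\mathbb{C}\setminus\{0\}$, and let $h_1:\mathbb{C}^2\to\mathbb{C}^2$ be the generalized Hénon map $h_1(x,y)=(y,P(y)-\delta x)$. Let $\theta\in(0,2\pi)\setminus\{\frac{\pi}{2},\pi,\frac{3\pi}{2}\}$, let $R_\theta:\mathbb{C}^2\to\mathbb{C}^2$ be the linear map with matrix $\begin{pmatrix}\cos\theta&-\sin\theta\\ \sin\theta&\cos\theta\end{pmatrix}$, let $h_2=R_\theta^{-1}\circ h_1\circ R_\theta$, and let $G=\langle h_1,h_2\rangle$ be the group of holomorphic automorphisms of $\mathbb{C}^2$ generated by $h_1,h_2$. Then there is a nonempty unbounded open set $U\subset\mathcal{F}(G)$ such that for every $(x,y)\in U$ and every sequence $\omega=(\omega_n)_{n\in\mathbb{N}}\in\{h_1,h_2,h_1^{-1},h_2^{-1}\}^{\mathbb{N}}$ for which the reduced word length of $S_k(\omega):=\omega_k\circ\omega_{k-1}\circ\cdots\circ\omega_1$ tends to $\infty$ as $k\to\infty$, we have $\|S_k(\omega)(x,y)\|\to\infty$ as $k\to\infty$.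
   Context: A family $\mathcal{A}$ of holomorphic maps $X\to Y$ is normal if every sequence in $\mathcal{A}$ has a subsequence that either converges uniformly on compact subsets or diverges properly (locally uniformly) to infinity. The Fatou set $\mathcal{F}(G)\subset\mathbb{C}^2$ of $G$ is the largest open subset of $\mathbb{C}^2$ on which the family $G$ (viewed as maps $\mathbb{C}^2\to\mathbb{C}^2$) is normal. The length of $S_k(\omega)$ is its length as a reduced word in the letters $h_1^{\pm1},h_2^{\pm1}$ (after cancelling adjacent inverse pairs). *)

(* Defs.v *)
From HB Require Import structures.
From mathcomp Require Import all_boot all_order all_algebra.
From mathcomp Require Import all_classical all_reals all_analysis.
From mathcomp.real_closed Require Import complex.
Set Implicit Arguments. Unset Strict Implicit. Unset Printing Implicit Defensive.
Import Order.TTheory GRing.Theory Num.Theory.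
Import numFieldNormedType.Exports.
Local Open Scope ring_scope.
Local Open Scope classical_set_scope.

(* The complex numbers C = R[i] over a real field R, viewed as a
   numClosedFieldType so that MathComp-Analysis equips it with its usual
   (normed, metric) topology. *)
Definition CC (R : realType) : numClosedFieldType := R[i].

Definition C2 (R : realType) := (CC R * CC R)%type.

(* A norm on C^2 (the max norm; all norms on C^2 are equivalent). *)
Definition norm2 {R : realType} (z : C2 R) : R :=
  Num.max (ComplexField.Normc.normc (z.1 : R[i])) (ComplexField.Normc.normc (z.2 : R[i])).

Definition dist2 {R : realType} (z w : C2 R) : R :=
  norm2 ((z.1 - w.1, z.2 - w.2) : C2 R).

Definition henon {R : realType} (P : {poly CC R}) (d : CC R) (z : C2 R) : C2 R :=
  (z.2, P.[z.2] - d * z.1).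
Definition henon_inv {R : realType} (P : {poly CC R}) (d : CC R) (z : C2 R) : C2 R :=
  ((P.[z.1] - z.2) / d, z.1).

Definition rot {R : realType} (t : R) (z : C2 R) : C2 R :=
  let c : CC R := ((cos t)%:C)%C in let s : CC R := ((sin t)%:C)%C in
  (c * z.1 - s * z.2, s * z.1 + c * z.2).
Definition rot_inv {R : realType} (t : R) (z : C2 R) : C2 R :=
  let c : CC R := ((cos t)%:C)%C in let s : CC R := ((sin t)%:C)%C in
  (c * z.1 + s * z.2, - s * z.1 + c * z.2).

Definition h2 {R : realType} P d (t : R) : C2 R -> C2 R :=
  rot_inv t \o henon P d \o rot t.
Definition h2_inv {R : realType} P d (t : R) : C2 R -> C2 R :=
  rot_inv t \o henon_inv P d \o rot t.

(* Letters h1^{+-1}, h2^{+-1}: (false, _) is h1, (true, _) is h2;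
   (_, false) is the map itself, (_, true) its inverse. *)
Definition letter := (bool * bool)%type.
Definition linv (l : letter) : letter := (l.1, ~~ l.2).

Definition eval_letter {R : realType} P d (t : R) (l : letter) : C2 R -> C2 R :=
  match l with
  | (false, false) => henon P d
  | (false, true) => henon_inv P d
  | (true, false) => h2 P d t
  | (true, true) => h2_inv P d t
  end.

Definition eval_word {R : realType} P d (t : R) (w : seq letter) : C2 R -> C2 R :=
  foldr (fun l f => eval_letter P d t l \o f) id w.

Definition push (l : letter) (w : seq letter) : seq letter :=
  if w is l' :: w' then (if l' == linv l then w' else l :: w) else [:: l].
Definition reduce (w : seq letter) : seq letter := foldr push [::] w.
Definition reduced_length (w : seq letter) : nat := size (reduce w).

Definition Ggroup {R : realType} P d (t : R) : set (C2 R -> C2 R) :=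
  [set f | exists w : seq letter, f = eval_word P d t w].

(* omega : nat -> letter, with omega n = omega_{n+1};
   word of S_k(omega) = omega_k o ... o omega_1 is [:: omega_k; ...; omega_1] *)
Definition Sword (om : nat -> letter) (k : nat) : seq letter := rev (mkseq om k).
Definition Smap {R : realType} P d (t : R) (om : nat -> letter) (k : nat) : C2 R -> C2 R :=
  eval_word P d t (Sword om k).

Definition normal_on {R : realType} (F : set (C2 R -> C2 R)) (V : set (C2 R)) : Prop :=
  forall f : nat -> (C2 R -> C2 R), (forall n, F (f n)) ->
  exists phi : nat -> nat, (forall n, (phi n < phi n.+1)%N) /\
   ((exists g : C2 R -> C2 R, forall K : set (C2 R), compact K -> K `<=` V ->
       forall e : R, 0 < e -> exists N : nat, forall n, (N <= n)%N ->
         forall z, K z -> dist2 (f (phi n) z) (g z) < e)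
    \/
    (forall K : set (C2 R), compact K -> K `<=` V ->
       forall M : R, exists N : nat, forall n, (N <= n)%N ->
         forall z, K z -> M < norm2 (f (phi n) z))).

(* Fatou set: the largest open set on which F is normal, i.e. the union of
   all open sets on which F is normal. *)
Definition fatou_set {R : realType} (F : set (C2 R -> C2 R)) : set (C2 R) :=
  [set z | exists V : set (C2 R), [/\ open V, V z & normal_on F V]].

Definition unbounded2 {R : realType} (U : set (C2 R)) : Prop :=
  forall M : R, exists z, U z /\ M < norm2 z.

(* Main.v *)
Require Import Defs.
From HB Require Import structures.
From mathcomp Require Import all_boot all_order all_algebra.
From mathcomp Require Import all_classical all_reals all_analysis.
From mathcomp.real_closed Require Import complex.
From mathcomp Require Import ring lra zify.
Import Order.TTheory GRing.Theory Num.Theory.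
Import numFieldNormedType.Exports.
Local Open Scope ring_scope.
Local Open Scope classical_set_scope.
Section Alg.
Local Open Scope complex_scope.
Local Open Scope ring_scope.
Variable R : realType.
Variable P : {poly CC R}.
Variable d : CC R.
Variable t : R.
Hypothesis d0 : d != 0.

Lemma cs1 : ((cos t)%:C * (cos t)%:C + (sin t)%:C * (sin t)%:C : CC R) = 1.
Proof. by rewrite -!rmorphM -rmorphD -!expr2 cos2Dsin2. Qed.

Lemma rot_rot_inv z : Defs.rot t (rot_inv t z) = z.
Proof.
case: z => x y; rewrite /Defs.rot /rot_inv /=; have h := cs1.
congr pair.
  transitivity ((((cos t)%:C * (cos t)%:C + (sin t)%:C * (sin t)%:C) : CC R) * x); first by ring.
  by rewrite h mul1r.
transitivity ((((cos t)%:C * (cos t)%:C + (sin t)%:C * (sin t)%:C) : CC R) * y); first by ring.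
by rewrite h mul1r.
Qed.

Lemma rot_inv_rot z : rot_inv t (Defs.rot t z) = z.
Proof.
case: z => x y; rewrite /Defs.rot /rot_inv /=; have h := cs1.
congr pair.
  transitivity ((((cos t)%:C * (cos t)%:C + (sin t)%:C * (sin t)%:C) : CC R) * x); first by ring.
  by rewrite h mul1r.
transitivity ((((cos t)%:C * (cos t)%:C + (sin t)%:C * (sin t)%:C) : CC R) * y); first by ring.
by rewrite h mul1r.
Qed.

Lemma henon_henon_inv z : henon P d (henon_inv P d z) = z.
Proof.
case: z => x y; rewrite /henon /henon_inv /=; congr pair.
by rewrite mulrC divfK // opprB addrC subrK.
Qed.

Lemma henon_inv_henon z : henon_inv P d (henon P d z) = z.
Proof.
case: z => x y; rewrite /henon /henon_inv /=; congr pair.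
rewrite opprB addrC subrK mulrC mulKf //.
Qed.

Lemma letter_inv l z : eval_letter P d t l (eval_letter P d t (linv l) z) = z.
Proof.
case: l => [[] []] /=; rewrite /h2 /h2_inv /= ?rot_rot_inv ?henon_henon_inv
  ?henon_inv_henon ?rot_inv_rot //.
Qed.

Lemma eval_push l w z : eval_word P d t (push l w) z = eval_letter P d t l (eval_word P d t w z).
Proof.
case: w => [|l' w] //=.
case: eqP => [->|] //=.
by rewrite letter_inv.
Qed.

Lemma eval_reduce w z : eval_word P d t (reduce w) z = eval_word P d t w z.
Proof.
elim: w z => [|l w IH] z //=.
by rewrite eval_push IH.
Qed.

End Alg.

Fixpoint redw (w : seq letter) : bool :=
  match w with a :: ((b :: _) as w') => (b != linv a) && redw w' | _ => true end.

Lemma redw_push l w : redw w -> redw (push l w).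
Proof.
case: w => [|l' w] //= h.
case: eqP => [_|/eqP ne] /=.
  by case: w h => [|l'' w] // /andP[].
by rewrite [l' != _]ne h.
Qed.

Lemma redw_reduce w : redw (reduce w).
Proof. by elim: w => [|l w IH] //=; apply: redw_push. Qed.
Section Nm.
Local Open Scope complex_scope.
Local Open Scope ring_scope.
Context {R : realType}.
Notation nm := (@ComplexField.Normc.normc R).

Lemma normC_nm (z : CC R) : `|z| = (nm z)%:C.
Proof. by case: z => a b; rewrite normc_def. Qed.

Lemma nm_ge0 (z : CC R) : 0 <= nm z.
Proof. by rewrite -ler0c -normC_nm normr_ge0. Qed.

Lemma nmD (a b : CC R) : nm (a + b) <= nm a + nm b.
Proof. by rewrite -lecR rmorphD /= -!normC_nm ler_normD. Qed.

Lemma nmM (a b : CC R) : nm (a * b) = nm a * nm b.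
Proof. exact: ComplexField.Normc.normcM. Qed.

Lemma nmV (a : CC R) : nm (a^-1) = (nm a)^-1.
Proof. exact: ComplexField.Normc.normcV. Qed.

Lemma nmN (a : CC R) : nm (- a) = nm a.
Proof. by apply: complexI; rewrite -!normC_nm normrN. Qed.

Lemma nmB (a b : CC R) : nm a - nm b <= nm (a - b).
Proof. have := nmD (a - b) b; rewrite subrK; lra. Qed.

Lemma nmB' (a b : CC R) : nm (a - b) <= nm a + nm b.
Proof. by have := nmD a (- b); rewrite nmN. Qed.

Lemma nm_real (r : R) : nm (r%:C) = `|r|.
Proof. by rewrite /ComplexField.Normc.normc /= expr0n /= addr0 sqrtr_sqr. Qed.

Lemma nm_i : nm 'i = 1.
Proof. by rewrite /ComplexField.Normc.normc /= expr0n /= add0r expr1n sqrtr1. Qed.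

Lemma nmX (a : CC R) n : nm (a ^+ n) = nm a ^+ n.
Proof.
elim: n => [|n IH]; first by rewrite !expr0 ComplexField.Normc.normc1.
by rewrite !exprS nmM IH.
Qed.

Lemma nm_eq0 (a : CC R) : (nm a == 0) = (a == 0).
Proof.
apply/eqP/eqP => [/ComplexField.Normc.eq0_normc //|->].
exact: ComplexField.Normc.normc0.
Qed.

Lemma nm0 : nm (0 : CC R) = 0.
Proof. by apply/eqP; rewrite nm_eq0. Qed.

Lemma poly_lb (p : {poly CC R}) : p != 0 -> exists c R0 : R, [/\ 0 < c, 1 <= R0 &
  forall y, R0 <= nm y -> c * nm y ^+ (size p).-1 <= nm p.[y]].
Proof.
elim/poly_ind: p => [|q a IH]; first by rewrite eqxx.
have [-> nz|qnz nz] := eqVneq q 0.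
  rewrite mul0r add0r in nz *; rewrite size_polyC.
  have a0 : a != 0.
    by apply/eqP => a0; move: nz; rewrite a0 polyC0 eqxx.
  exists (nm a), 1; split => //.
    by rewrite lt_def nm_eq0 a0 nm_ge0.
  by move=> y _; rewrite a0 /= expr0 mulr1 hornerC.
have [c [R0 [c0 R01 H]]] := IH qnz.
rewrite size_MXaddC (negbTE qnz) /=.
exists (c / 2), (Num.max R0 (2 * nm a / c + 1)); split => //.
- by rewrite divr_gt0.
- by rewrite le_max R01.
move=> y; rewrite ge_max => /andP[hy1 hy2].
rewrite hornerMXaddC.
have hq := H y hy1.
set Y := nm y in hy1 hy2 hq *.
have Y1 : 1 <= Y by apply: le_trans hy1.
have sq : (size q) = (size q).-1.+1 by rewrite prednK // size_poly_gt0.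
rewrite sq exprS.
set Yn := Y ^+ (size q).-1 in hq *.
have Yn1 : 1 <= Yn by rewrite exprn_ege1.
have := nmB (q.[y] * y) (- a); rewrite opprK nmN nmM -/Y => h.
have A0 := nm_ge0 a.
have hc : 2 * nm a <= c * Y.
  have : 2 * nm a / c + 1 - 1 <= Y - 1 by lra.
  rewrite addrK ler_pdivrMr // => h'.
  have : c * (Y - 1) <= c * Y by rewrite ler_pM2l //; lra.
  lra.
have hq' : c * Yn * Y <= nm q.[y] * Y by rewrite ler_pM2r //; lra.
have : c * Y <= c * (Y * Yn).
  rewrite ler_pM2l // -{1}(mulr1 Y) ler_pM2l //; lra.
nra.
Qed.

Lemma poly_big (p : {poly CC R}) : (2 < size p)%N -> forall K : R, exists R0 : R,
  1 <= R0 /\ forall y, R0 <= nm y -> K * nm y <= nm p.[y].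
Proof.
move=> sp K.
have pnz : p != 0 by rewrite -size_poly_gt0; apply: ltn_trans sp.
have [c [R0 [c0 R01 H]]] := poly_lb p pnz.
exists (Num.max R0 (`|K| / c)); split; first by rewrite le_max R01.
move=> y; rewrite ge_max => /andP[h1 h2].
have hp := H y h1.
set Y := nm y in h1 h2 hp *.
have Y1 : 1 <= Y by apply: le_trans h1.
have e : (size p).-1 = ((size p).-1 - 2).+2 by move: sp; clear; lia.
rewrite e !exprS mulrA in hp.
set Yn := Y ^+ _ in hp.
have Yn1 : 1 <= Yn by rewrite exprn_ege1.
have hK : `|K| <= c * Y by rewrite mulrC -ler_pdivrMr.
have : K <= `|K| := ler_norm K.
have : c * Y * Y <= c * Y * Y * Yn.
  by rewrite -{1}(mulr1 (c * Y * Y)) ler_pM2l // mulr_gt0 // ?mulr_gt0 //; lra.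
nra.
Qed.

End Nm.
Definition letters : seq letter := [:: (false,false); (false,true); (true,false); (true,true)].

Fixpoint allw (n : nat) : seq (seq letter) :=
  match n with
  | 0 => [:: [::]]
  | n'.+1 => [::] :: [seq l :: w | l <- letters, w <- allw n']
  end.

Lemma allwP n w : (size w <= n)%N -> w \in allw n.
Proof.
elim: n w => [|n IH] [|l w] //= h.
rewrite inE; apply/orP; right.
have Hw := IH w h.
by case: l => [[] []]; rewrite !mem_cat (map_f _ Hw) ?orbT.
Qed.

Lemma pigeon (T : eqType) (s : seq T) (u : nat -> T) :
  (forall n, u n \in s) -> exists v, forall N, exists n, (N <= n)%N /\ u n = v.
Proof.
elim: s u => [|a s IH] u hu; first by have := hu 0%N.
have [H|H] := EM (forall N, exists n, (N <= n)%N /\ u n = a); first by exists a.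
have [N0 HN0] : exists N0, forall n, (N0 <= n)%N -> u n != a.
  apply: contrapT => nH; apply: H => N.
  apply: contrapT => nE; apply: nH; exists N => n Nn; apply/eqP => ua.
  by apply: nE; exists n.
have hu' : forall n, u (n + N0)%N \in s.
  move=> n; have := hu (n + N0)%N; rewrite inE => /orP[/eqP e|//].
  by have := HN0 (n + N0)%N (leq_addl _ _); rewrite e eqxx.
have [v Hv] := IH (fun n => u (n + N0)%N) hu'.
exists v => N; have [n [h1 h2]] := Hv N.
by exists (n + N0)%N; split => //; apply: leq_trans h1 (leq_addr _ _).
Qed.

Lemma extract (Q : nat -> Prop) : (forall N, exists n, (N <= n)%N /\ Q n) ->
  exists phi : nat -> nat, (forall n, (phi n < phi n.+1)%N) /\ forall n, Q (phi n).
Proof.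
move=> H; have [h Hh] := choice H.
pose fix phi k := match k with 0 => h 0%N | k'.+1 => h (phi k').+1 end.
exists phi; split => [n|[|n]] /=; first exact: (Hh _).1.
- exact: (Hh _).2.
- exact: (Hh _).2.
Qed.

Lemma extract_unb (l : nat -> nat) : (forall L, exists n, (L <= l n)%N) ->
  exists phi : nat -> nat, (forall n, (phi n < phi n.+1)%N) /\ forall n, (n <= l (phi n))%N.
Proof.
move=> H; have [g Hg] := choice H.
pose fix phi k := match k with 0 => g 0%N | k'.+1 => g (\max_(j < (phi k').+1) l j).+1 end.
have key k : (\max_(j < (phi k).+1) l j < l (phi k.+1))%N by exact: Hg.
have lt k : (phi k < phi k.+1)%N.
  rewrite ltnNge; apply/negP => le.
  have := key k.
  have : (l (phi k.+1) <= \max_(j < (phi k).+1) l j)%N.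
    by apply: (leq_bigmax_cond (Ordinal (le : (phi k.+1 < (phi k).+1)%N))).
  lia.
exists phi; split => // n; elim: n => [|n IH] //.
have := key n.
have : (l (phi n) <= \max_(j < (phi n).+1) l j)%N.
  by apply: (leq_bigmax_cond (Ordinal (ltnSn (phi n)))).
lia.
Qed.

Lemma nat_lt_pow2 (R : realType) (n : nat) : (n%:R : R) < 2 ^+ n.
Proof.
elim: n => [|n IH]; first by rewrite expr0 ltr01.
rewrite exprS -natr1.
have : (1 : R) <= 2 ^+ n by rewrite exprn_ege1 // ler1n.
lra.
Qed.
Section PP.
Local Open Scope complex_scope.
Local Open Scope ring_scope.
Variable R : realType.
Variable P : {poly CC R}.
Variable d : CC R.
Variable t : R.
Hypothesis d0 : d != 0.
Hypothesis sP : (2 < size P)%N.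
Hypothesis c0 : cos t != 0.
Hypothesis s0 : sin t != 0.
Notation nm := (@ComplexField.Normc.normc R).
Notation cc := ((cos t)%:C : CC R).
Notation ss := ((sin t)%:C : CC R).

Lemma nm_rot1 (a b : R) : nm ((a%:C - b%:C * 'i) : CC R) = Num.sqrt (a ^+ 2 + b ^+ 2).
Proof. rewrite /ComplexField.Normc.normc /=; congr Num.sqrt; ring. Qed.
Lemma nm_rot2 (a b : R) : nm ((a%:C + b%:C * 'i) : CC R) = Num.sqrt (a ^+ 2 + b ^+ 2).
Proof. rewrite /ComplexField.Normc.normc /=; congr Num.sqrt; ring. Qed.

Definition N2 (z : C2 R) : R := norm2 z.
Definition Fr (b : bool) (z : C2 R) := if b then Defs.rot t z else z.
Definition Fi (b : bool) (z : C2 R) := if b then rot_inv t z else z.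
Definition Hm (e : bool) := if e then henon_inv P d else henon P d.
Definition mn (e : bool) (w : C2 R) := if e then w.1 else w.2.
Definition ot (e : bool) (w : C2 R) := if e then w.2 else w.1.

Lemma letterE l z : eval_letter P d t l z = Fi l.1 (Hm l.2 (Fr l.1 z)).
Proof. by case: l => [[] []]. Qed.
Lemma Fr_Fi b z : Fr b (Fi b z) = z.
Proof. by case: b => //=; rewrite rot_rot_inv. Qed.
Lemma Fi_Fr b z : Fi b (Fr b z) = z.
Proof. by case: b => //=; rewrite rot_inv_rot. Qed.

Lemma N2_1 z : nm z.1 <= N2 z.
Proof. by rewrite /N2 /norm2 le_max lexx. Qed.
Lemma N2_2 z : nm z.2 <= N2 z.
Proof. by rewrite /N2 /norm2 le_max lexx orbT. Qed.
Lemma N2_le z a : nm z.1 <= a -> nm z.2 <= a -> N2 z <= a.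
Proof. by move=> h1 h2; rewrite /N2 /norm2 ge_max h1 h2. Qed.
Lemma mn_N2 e w : nm (mn e w) <= N2 w.
Proof. by case: e; [exact: N2_1 | exact: N2_2]. Qed.
Lemma N2_mn e w : nm (ot e w) <= nm (mn e w) -> N2 w <= nm (mn e w).
Proof. by case: e => /= h; apply: N2_le. Qed.

Lemma nm_cc : nm cc = `|cos t|. Proof. exact: nm_real. Qed.
Lemma nm_ss : nm ss = `|sin t|. Proof. exact: nm_real. Qed.
Lemma nm_cc1 : nm cc <= 1. Proof. by rewrite nm_cc cos_max. Qed.
Lemma nm_ss1 : nm ss <= 1. Proof. by rewrite nm_ss sin_max. Qed.

Lemma lin_bound (a b x y : CC R) : nm a <= 1 -> nm b <= 1 ->
  nm (a * x + b * y) <= nm x + nm y.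
Proof.
move=> ha hb; have := nmD (a * x) (b * y); rewrite !nmM.
have := nm_ge0 x; have := nm_ge0 y; have := nm_ge0 a; have := nm_ge0 b.
nra.
Qed.

Lemma nmNss1 : nm (- ss) <= 1. Proof. by rewrite nmN nm_ss1. Qed.

Lemma N2_Fr b z : N2 (Fr b z) <= 2 * N2 z.
Proof.
have h1 := N2_1 z; have h2 := N2_2 z; have h0 := nm_ge0 z.1.
case: b; rewrite /Fr /Fi /=; last by lra.
apply: N2_le => /=.
  rewrite -mulNr; have := lin_bound _ _ z.1 z.2 nm_cc1 nmNss1; lra.
have := lin_bound _ _ z.1 z.2 nm_ss1 nm_cc1; lra.
Qed.

Lemma N2_Fi b z : N2 (Fi b z) <= 2 * N2 z.
Proof.
have h1 := N2_1 z; have h2 := N2_2 z; have h0 := nm_ge0 z.1.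
case: b; rewrite /Fr /Fi /=; last by lra.
apply: N2_le => /=.
  have := lin_bound _ _ z.1 z.2 nm_cc1 nm_ss1; lra.
have := lin_bound _ _ z.1 z.2 nmNss1 nm_cc1; lra.
Qed.

Definition kk : R := Num.min `|cos t| `|sin t|.
Definition GG : R := 16 / kk.
Definition AA : R := 4 / kk.

Lemma kk_gt0 : 0 < kk.
Proof. by rewrite /kk lt_min !normr_gt0 c0 s0. Qed.
Lemma kk_cc : kk <= nm cc.
Proof. by rewrite nm_cc /kk ge_min lexx. Qed.
Lemma kk_ss : kk <= nm ss.
Proof. by rewrite nm_ss /kk ge_min lexx orbT. Qed.
Lemma kk_le1 : kk <= 1.
Proof. exact: le_trans kk_cc nm_cc1. Qed.
Lemma GGkk : GG * kk = 16.
Proof. by rewrite /GG mulrAC -mulrA divff ?mulr1 // gt_eqF // kk_gt0. Qed.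
Lemma AAkk : AA * kk = 4.
Proof. by rewrite /AA mulrAC -mulrA divff ?mulr1 // gt_eqF // kk_gt0. Qed.
Lemma GG_ge : 16 <= GG.
Proof. have := GGkk; have := kk_le1; have := kk_gt0; nra. Qed.
Lemma AA_ge : 4 <= AA.
Proof. have := AAkk; have := kk_le1; have := kk_gt0; nra. Qed.

Lemma henonB (A G : R) : 0 <= A -> 0 <= G -> exists R0 : R, 1 <= R0 /\
  forall e w, nm (ot e w) <= A * nm (mn e w) -> R0 <= nm (mn e w) ->
  G * nm (mn e w) <= nm (mn e (Hm e w)) /\ nm (ot e (Hm e w)) = nm (mn e w).
Proof.
move=> A0 G0.
have [R0 [R01 H]] := poly_big P sP (G + nm d * A + G * nm d + A).
exists R0; split => // [[]] [x y] /= ho hm; split => //.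
- have hp := H x hm.
  have nd : 0 < nm d by rewrite lt_def nm_eq0 d0 nm_ge0.
  rewrite nmM nmV ler_pdivlMr // .
  have := nmB P.[x] y.
  have := nm_ge0 x; have := nm_ge0 y; nra.
- have hp := H y hm.
  have := nmB P.[y] (d * x); rewrite nmM.
  have d0' := nm_ge0 d; have y0 := nm_ge0 y.
  have h1 : nm d * nm x <= nm d * (A * nm y) by rewrite ler_wpM2l.
  have h2 : 0 <= G * nm d * nm y by rewrite !mulr_ge0.
  have h3 : 0 <= A * nm y by rewrite !mulr_ge0.
  nra.
Qed.

Definition Tset (R0 : R) (l : letter) (z : C2 R) :=
  let w := Fr l.1 z in GG * nm (ot l.2 w) <= nm (mn l.2 w) /\ GG * R0 <= nm (mn l.2 w).
Definition Dset (R0 : R) (l : letter) (z : C2 R) :=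
  let w := Fr l.1 z in [/\ nm (ot l.2 w) <= AA * nm (mn l.2 w), R0 <= nm (mn l.2 w)
    & kk / 4 * N2 z <= nm (mn l.2 w)].

Variable R0 : R.
Hypothesis R01 : 1 <= R0.
Hypothesis HB : forall e w, nm (ot e w) <= AA * nm (mn e w) -> R0 <= nm (mn e w) ->
  GG * nm (mn e w) <= nm (mn e (Hm e w)) /\ nm (ot e (Hm e w)) = nm (mn e w).

Lemma step l z : Dset R0 l z -> Tset R0 l (eval_letter P d t l z) /\
  2 * N2 z <= N2 (eval_letter P d t l z).
Proof.
case=> h1 h2 h3; rewrite /Tset letterE Fr_Fi.
set w := Fr l.1 z in h1 h2 h3 *.
have [g1 g2] := HB _ _ h1 h2.
have G16 := GG_ge; have GK := GGkk; have kp := kk_gt0.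
have m0 := nm_ge0 (mn l.2 w).
split; first split.
- by rewrite g2.
- by nra.
have := N2_Fr l.1 (Fi l.1 (Hm l.2 (Fr l.1 z))); rewrite Fr_Fi -/w.
have := mn_N2 l.2 (Hm l.2 w).
have := N2_1 z; have := nm_ge0 z.1.
nra.
Qed.

Lemma trans_same l z : Tset R0 l z -> Dset R0 l z.
Proof.
rewrite /Tset /Dset; set w := Fr l.1 z => -[h1 h2].
have G16 := GG_ge; have A4 := AA_ge; have kp := kk_gt0; have k1 := kk_le1.
have o0 := nm_ge0 (ot l.2 w); have m0 := nm_ge0 (mn l.2 w).
have hN : N2 w <= nm (mn l.2 w) by apply: N2_mn; nra.
have := N2_Fi l.1 w; rewrite /w Fi_Fr -/w => hz.
split; nra.
Qed.

Lemma coordC (a b p q : CC R) : kk <= nm a -> nm a <= 1 -> nm b <= 1 ->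
  GG * nm q <= nm p -> kk / 2 * nm p <= nm (a * p + b * q) <= 2 * nm p.
Proof.
move=> ha1 ha2 hb hq.
have G16 := GG_ge; have GK := GGkk; have kp := kk_gt0.
have p0 := nm_ge0 p; have q0 := nm_ge0 q; have b0 := nm_ge0 b.
have hq' : 16 * nm q <= kk * nm p.
  by have := ler_wpM2l (ltW kp) hq; rewrite mulrA [kk * GG]mulrC GK.
apply/andP; split.
  have := nmB (a * p) (- (b * q)); rewrite opprK nmN !nmM.
  nra.
have := lin_bound _ _ p q ha2 hb.
nra.
Qed.

Lemma coordC' (a b : CC R) (w : C2 R) e : kk <= nm a <= 1 -> kk <= nm b <= 1 ->
  GG * nm (ot e w) <= nm (mn e w) ->
  kk / 2 * nm (mn e w) <= nm (a * w.1 + b * w.2) <= 2 * nm (mn e w).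
Proof.
move=> /andP[ha1 ha2] /andP[hb1 hb2]; case: e => /= h.
  exact: coordC.
rewrite addrC; exact: coordC.
Qed.

Lemma Fr_cross b b' z : b != b' ->
  Fr b z = if b then Defs.rot t (Fr b' z) else rot_inv t (Fr b' z).
Proof. by case: b; case: b' => //= _; rewrite rot_inv_rot. Qed.

Lemma trans_cross l l' z : Tset R0 l' z -> l.1 != l'.1 -> Dset R0 l z.
Proof.
rewrite /Tset /Dset; set w := Fr l'.1 z => -[h1 h2] ne.
have G16 := GG_ge; have A4 := AA_ge; have kp := kk_gt0; have k1 := kk_le1.
have GK := GGkk; have AK := AAkk.
have o0 := nm_ge0 (ot l'.2 w); have m0 := nm_ge0 (mn l'.2 w).
have hN : N2 w <= nm (mn l'.2 w) by apply: N2_mn; nra.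
have := N2_Fi l'.1 w; rewrite /w Fi_Fr -/w => hz.
set m := nm (mn l'.2 w) in h1 h2 m0 hN hz.
have kc := kk_cc; have ks := kk_ss; have c1 := nm_cc1; have s1 := nm_ss1.
have kns : kk <= nm (- ss) by rewrite nmN.
have ns1 : nm (- ss) <= 1 by rewrite nmN.
have [hu1 hu2] : (kk / 2 * m <= nm (Fr l.1 z).1 <= 2 * m) /\
                 (kk / 2 * m <= nm (Fr l.1 z).2 <= 2 * m).
  have E : Fr l.1 z = if l.1 then Defs.rot t w else rot_inv t w.
    exact: Fr_cross.
  rewrite E; case: l.1 => /=.
    by rewrite -mulNr; split; apply: coordC'; rewrite ?kc ?ks ?kns ?c1 ?s1 ?ns1.
  by split; apply: coordC'; rewrite ?kc ?ks ?kns ?c1 ?s1 ?ns1.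
move: hu1 hu2 => /andP[a1 a2] /andP[b1 b2].
have [m1 m2 o1 o2] : [/\ kk / 2 * m <= nm (mn l.2 (Fr l.1 z)),
   nm (mn l.2 (Fr l.1 z)) <= 2 * m, kk / 2 * m <= nm (ot l.2 (Fr l.1 z)) &
   nm (ot l.2 (Fr l.1 z)) <= 2 * m].
  by case: l.2 => /=; split.
split; nra.
Qed.

Definition Uset (z : C2 R) := 2 * nm (z.2 - 'i * z.1) < nm z.1 /\ 2 * R0 < nm z.1.

Lemma U_D l z : Uset z -> Dset R0 l z.
Proof.
case=> hU1 hU2.
set X := nm z.1 in hU1 hU2.
set r := z.2 - 'i * z.1 in hU1.
have ez2 : z.2 = 'i * z.1 + r by rewrite /r addrC subrK.
have r0 := nm_ge0 r.
have X0 : 0 <= X by rewrite /X nm_ge0.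
have hNz : N2 z <= 3 / 2 * X.
  apply: N2_le; first by rewrite -/X; lra.
  rewrite ez2; have := nmD ('i * z.1) r; rewrite nmM nm_i mul1r -/X; lra.
have [hw1 hw2] : (X / 2 <= nm (Fr l.1 z).1 <= 3 / 2 * X) /\
                 (X / 2 <= nm (Fr l.1 z).2 <= 3 / 2 * X).
  case: l.1 => /=.
    have e1 : cc * z.1 - ss * z.2 = (cc - ss * 'i) * z.1 - ss * r.
      by rewrite ez2; ring.
    have e2 : ss * z.1 + cc * z.2 = (ss + cc * 'i) * z.1 + cc * r.
      by rewrite ez2; ring.
    have n1 : nm (cc - ss * 'i) = 1.
      by rewrite nm_rot1 cos2Dsin2 sqrtr1.
    have n2 : nm (ss + cc * 'i) = 1.
      by rewrite nm_rot2 addrC cos2Dsin2 sqrtr1.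
    have s1 := nm_ss1; have c1 := nm_cc1.
    have := nm_ge0 ss; have := nm_ge0 cc.
    rewrite e1 e2; split; apply/andP; split.
    - have := nmB ((cc - ss * 'i) * z.1) (ss * r); rewrite !nmM n1 -/X; nra.
    - have := nmB' ((cc - ss * 'i) * z.1) (ss * r); rewrite !nmM n1 -/X; nra.
    - have := nmB ((ss + cc * 'i) * z.1) (- (cc * r)); rewrite opprK nmN !nmM n2 -/X; nra.
    - have := nmD ((ss + cc * 'i) * z.1) (cc * r); rewrite !nmM n2 -/X; nra.
  rewrite -/X.
  split; apply/andP; split; try lra.
    rewrite ez2; have := nmB ('i * z.1) (- r); rewrite opprK nmN nmM nm_i -/X; lra.
  rewrite ez2; have := nmD ('i * z.1) r; rewrite nmM nm_i -/X; lra.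
move: hw1 hw2 => /andP[a1 a2] /andP[b1 b2].
have [m1 m2 o1 o2] : [/\ X / 2 <= nm (mn l.2 (Fr l.1 z)),
   nm (mn l.2 (Fr l.1 z)) <= 3 / 2 * X, X / 2 <= nm (ot l.2 (Fr l.1 z)) &
   nm (ot l.2 (Fr l.1 z)) <= 3 / 2 * X].
  by case: l.2 => /=; split.
have A4 := AA_ge; have kp := kk_gt0; have k1 := kk_le1.
split; nra.
Qed.

Definition state_ok (w : seq letter) (u : C2 R) :=
  if w is l :: _ then Tset R0 l u else True.

Lemma pingpong w z : redw w -> Uset z ->
  state_ok w (eval_word P d t w z) /\ 2 ^+ size w * N2 z <= N2 (eval_word P d t w z).
Proof.
move=> + Uz; elim: w => [|l w IH] /=; first by rewrite expr0 mul1r.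
move=> hred.
have [hs hn] : state_ok w (eval_word P d t w z) /\
    2 ^+ size w * N2 z <= N2 (eval_word P d t w z).
  by apply: IH; case: w hred => [|l' w] // /andP[].
have hD : Dset R0 l (eval_word P d t w z).
  case: w hred hs hn {IH} => [|l' w] /=.
    by move=> _ _ _; apply: U_D.
  move=> /andP[ne _] hT _.
  have [e|ne1] := eqVneq l.1 l'.1; last exact: (trans_cross _ _ _ hT ne1).
  have E : l = l'.
    by move: ne e; clear; case: l => [b1 e1]; case: l' => [b2 e2] /=; case: b1; case: b2; case: e1; case: e2.
  by rewrite E; exact: trans_same.
have [hT hN] := step _ _ hD.
split => //.
rewrite exprS -mulrA.
have : 0 <= 2 ^+ size w * N2 z.
  by rewrite mulr_ge0 ?exprn_ge0 // /N2 /norm2 le_max nm_ge0.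
lra.
Qed.

End PP.
Section Main.
Local Open Scope complex_scope.
Local Open Scope ring_scope.
Variable R : realType.
Variable P : {poly CC R}.
Variable d : CC R.
Variable t : R.
Hypothesis d0 : d != 0.
Hypothesis sP : (2 < size P)%N.
Hypothesis c0 : cos t != 0.
Hypothesis s0 : sin t != 0.
Notation nm := (@ComplexField.Normc.normc R).

Lemma nat_above (M : R) : exists m : nat, M < m%:R.
Proof.
exists (Num.Def.archi_bound (Num.max M 0)).
have := @archi_boundP R (Num.max M 0); rewrite le_max lexx orbT => /(_ isT).
have : M <= Num.max M 0 by rewrite le_max lexx.
lra.
Qed.

Lemma ball_open_aux (U : set (C2 R)) : (forall z, U z -> exists e : R, 0 < e /\ forall w : C2 R, nm (z.1 - w.1) < e -> nm (z.2 - w.2) < e -> U w) -> open U.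
Proof.
move=> H. rewrite openE => z Uz.
have [e [e0 He]] := H z Uz.
apply/nbhs_ballP. exists (e%:C)%C. rewrite /= ltcR //.
move=> w [/= h1 h2]. apply: He.
 move: h1; rewrite /ball /= normC_nm ltcR //.
 move: h2; rewrite /ball /= normC_nm ltcR //.
Qed.

Lemma main_sec : exists U : set (C2 R),
    [/\ open U, U !=set0, unbounded2 U, U `<=` fatou_set (Ggroup P d t) &
      forall z : C2 R, U z ->
      forall om : nat -> letter,
        (forall m : nat, exists N : nat, forall k : nat, (N <= k)%N ->
           (m <= reduced_length (Sword om k))%N) ->
        forall M : R, exists N : nat, forall k : nat, (N <= k)%N ->
           M < norm2 (Smap P d t om k z)].
Proof.
have hA : 0 <= AA R t by have := AA_ge _ _ c0 s0; lra.
have hG : 0 <= GG R t by have := GG_ge _ _ c0 s0; lra.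
have [R0 [R01 HB]] := henonB _ _ _ d0 sP _ _ hA hG.
have key : forall z w, Uset R R0 z ->
    (size (reduce w))%:R < norm2 (eval_word P d t w z).
  move=> z w Uz.
  rewrite -(eval_reduce _ _ _ _ d0).
  have [_ h] := pingpong _ _ _ _ c0 s0 _ HB _ _ (redw_reduce w) Uz.
  move: h; rewrite /N2 => h.
  have hz : 1 <= norm2 z.
    case: Uz => _ h2; have := N2_1 _ z; rewrite /N2; lra.
  have := nat_lt_pow2 R (size (reduce w)).
  have : 2 ^+ size (reduce w) <= 2 ^+ size (reduce w) * norm2 z.
    by rewrite -{1}(mulr1 (2 ^+ _)) ler_wpM2l ?exprn_ge0.
  lra.
have unb : unbounded2 (Uset R R0).
  move=> M; set r := Num.max M (2 * R0) + 1.
  have m1 : M <= Num.max M (2 * R0) by rewrite le_max lexx.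
  have m2 : 2 * R0 <= Num.max M (2 * R0) by rewrite le_max lexx orbT.
  have hr1 : M < r by rewrite /r; lra.
  have hr2 : 2 * R0 < r by rewrite /r; lra.
  have nr : nm (r%:C) = r by rewrite nm_real ger0_norm //; lra.
  exists (r%:C, 'i * r%:C); split.
    by rewrite /Uset subrr nm0 nr; lra.
  have := N2_1 _ (r%:C, 'i * r%:C); rewrite /N2 nr; lra.
have opU : open (Uset R R0).
  apply: ball_open_aux => z [hU1 hU2].
  set X := nm z.1 in hU1 hU2; set D0 := nm (z.2 - 'i * z.1) in hU1.
  exists (Num.min ((X - 2 * D0) / 6) ((X - 2 * R0) / 2)); split.
    by rewrite lt_min !divr_gt0 //; lra.
  move=> w h1 h2.
  have e1 : Num.min ((X - 2 * D0) / 6) ((X - 2 * R0) / 2) <= (X - 2 * D0) / 6.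
    by rewrite ge_min lexx.
  have e2 : Num.min ((X - 2 * D0) / 6) ((X - 2 * R0) / 2) <= (X - 2 * R0) / 2.
    by rewrite ge_min lexx orbT.
  set e := Num.min _ _ in h1 h2 e1 e2.
  have E1 : w.1 = z.1 - (z.1 - w.1) by ring.
  have E2 : w.2 - 'i * w.1 = (z.2 - 'i * z.1) - (z.2 - w.2) + 'i * (z.1 - w.1) by ring.
  have f1 := nmB z.1 (z.1 - w.1); rewrite -E1 -/X in f1.
  have f2 := nmB' (z.2 - 'i * z.1) (z.2 - w.2).
  have f3 := nmD ((z.2 - 'i * z.1) - (z.2 - w.2)) ('i * (z.1 - w.1)).
  rewrite -E2 nmM nm_i mul1r in f3.
  rewrite -/D0 in f2.
  split; lra.
exists (Uset R R0); split => //.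
- by have [z [Uz _]] := unb 0; exists z.
- move=> z Uz; exists (Uset R R0); split => //.
  move=> f hf.
  have [wf Hwf] := choice hf.
  pose l n := size (reduce (wf n)).
  have [H|H] := EM (forall L, exists n, (L <= l n)%N).
    have [phi [inc Hl]] := extract_unb _ H.
    exists phi; split => //; right => K _ KV M.
    have [m hm] := nat_above M.
    exists m => n mn y Ky.
    have := key y (wf (phi n)) (KV y Ky); rewrite -Hwf.
    have : (m%:R : R) <= (l (phi n))%:R by rewrite ler_nat; apply: leq_trans mn (Hl n).
    rewrite /l; lra.
  have [L HL] : exists L, forall n, (l n < L)%N.
    apply: contrapT => nE; apply: H => L.
    apply: contrapT => nE2; apply: nE; exists L => n.
    rewrite ltnNge; apply/negP => Ln; apply: nE2; by exists n.
  have [v Hv] := pigeon _ _ (fun n => reduce (wf n)) (fun n => allwP _ _ (ltnW (HL n))).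
  have [phi [inc Hphi]] := extract _ Hv.
  exists phi; split => //; left; exists (eval_word P d t v) => K _ _ e e0.
  exists 0%N => n _ y _.
  rewrite Hwf -(eval_reduce _ _ _ _ d0) Hphi /dist2 !subrr /norm2.
  by rewrite nm0 maxxx.
- move=> z Uz om hom M.
  have [m hm] := nat_above M.
  have [N HN] := hom m.
  exists N => k Nk.
  have := key z (Sword om k) Uz.
  have : (m%:R : R) <= (size (reduce (Sword om k)))%:R by rewrite ler_nat; exact: HN.
  rewrite /Smap; lra.
Qed.
End Main.
Lemma sin_ne0 (R : realType) (t : R) : 0 < t < 2 * pi -> t != pi -> sin t != 0.
Proof.
move=> /andP[t0 t2] tp; have p0 : 0 < pi :> R := pi_gt0 R.
have [h|h|h] := ltgtP t pi.
- by rewrite gt_eqF // sin_gt0_pi // t0 h.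
- have -> : t = (t - pi) + pi by rewrite subrK.
  rewrite sinDpi oppr_eq0 gt_eqF // sin_gt0_pi //.
  apply/andP; split; lra.
- by rewrite h eqxx in tp.
Qed.

Lemma cos_ne0 (R : realType) (t : R) : 0 < t < 2 * pi -> t != pi / 2 -> t != 3 * pi / 2 ->
  cos t != 0.
Proof.
move=> /andP[t0 t2] t1 t3; have p0 : 0 < pi :> R := pi_gt0 R.
have [h|h|h] := ltgtP t (pi / 2).
- by rewrite gt_eqF // cos_gt0_pihalf //; apply/andP; split; lra.
- have [h'|h'|h'] := ltgtP t (3 * pi / 2).
  + have : 0 < sin (t - pi / 2) by apply: sin_gt0_pi; apply/andP; split; lra.
    by rewrite sinBpihalf oppr_gt0 => /lt_eqF ->.
  + have -> : t = (t - pi *+ 2) + pi *+ 2 by rewrite subrK.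
    rewrite cosD2pi gt_eqF // cos_gt0_pihalf //; rewrite -mulr_natl; apply/andP; split; lra.
  + by rewrite h' eqxx in t3.
- by rewrite h eqxx in t1.
Qed.

Theorem theoremA (R : realType) (P : {poly CC R}) (d : CC R) (t : R) :
  (2 < size P)%N ->
  d != 0 ->
  0 < t < 2 * pi ->
  t != pi / 2 -> t != pi -> t != 3 * pi / 2 ->
  exists U : set (C2 R),
    [/\ open U, U !=set0, unbounded2 U, U `<=` fatou_set (Ggroup P d t) &
      forall z : C2 R, U z ->
      forall om : nat -> letter,
        (forall m : nat, exists N : nat, forall k : nat, (N <= k)%N ->
           (m <= reduced_length (Sword om k))%N) ->
        forall M : R, exists N : nat, forall k : nat, (N <= k)%N ->
           M < norm2 (Smap P d t om k z)].
Proof.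
move=> sP d0 ht h1 h2 h3.
exact: (@main_sec R P d t d0 sP (cos_ne0 _ _ ht h1 h3) (sin_ne0 _ _ ht h2)).
Qed.
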